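(* Let $G$ be a weakly-reversible chemical reaction network in $s$ species and $\mathbf{k}$ a field of characteristic zero. If $G$ is atomic, then the ideal $(\mathcal{E}_G)\subseteq\mathbf{k}[x_1,\dots,x_s]$ is prime.
   Context: A chemical reaction network (CRN) consists of positive integers $s,n$, a finite directed graph $G$ with vertex set $\{1,\dots,n\}$ and edge set $E(G)$, and an injective labeling of vertex $i$ by a monic monomial $\psi_i=\prod_{j=1}^s x_j^{y_{ij}}$. $G$ is weakly-reversible iff each connected component is strongly connected. The associated event-system $\mathcal{E}_G$ is the set of binomials $\psi_i-\psi_j$, one for each pair $\{i,j\}$ with $(i,j)\in E(G)$ or $(j,i)\in E(G)$, and $(\mathcal{E}_G)$ is the ideal it generates. The event-graph $\overline{G}$ has as vertices all monic monomials in $x_1,\dots,x_s$ (including $1$), with an edge $(N\psi_i,N\psi_j)$ for each $(i,j)\in E(G)$ and each monic monomial $N$. The atoms of $G$ are the variables $x_i$ that are isolated vertices of $\overline{G}$. An atomic monomial is a monic monomial all of whose variables are atoms. $G$ is atomic iff every connected component of $\overline{G}$ contains exactly one atomic monomial. *)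

(* Defs.v *)
From HB Require Import structures.
From mathcomp Require Import all_boot all_order all_algebra.
From mathcomp Require Import mpoly.
From Stdlib Require Import Relations.
Set Implicit Arguments. Unset Strict Implicit. Unset Printing Implicit Defensive.
Import GRing.Theory.
Local Open Scope ring_scope.

(** A chemical reaction network: vertices 'I_n, directed edges given by the
    relation E, vertex i labeled by the monic monomial with exponent vector y i
    in 'X_{1..s}; the labeling must be injective. *)

Definition sym_edge (n : nat) (E : rel 'I_n) : rel 'I_n :=
  fun i j => E i j || E j i.

Definition weakly_reversible (n : nat) (E : rel 'I_n) : Prop :=
  forall i j : 'I_n, connect (sym_edge E) i j -> connect E i j.

Definition event_edge (s n : nat) (E : rel 'I_n) (y : 'I_n -> 'X_{1..s})
  (m m' : 'X_{1..s}) : Prop :=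
  exists (i j : 'I_n) (N : 'X_{1..s}),
    E i j /\ m = mnm_add N (y i) /\ m' = mnm_add N (y j).

Definition event_connected (s n : nat) (E : rel 'I_n) (y : 'I_n -> 'X_{1..s}) :
  'X_{1..s} -> 'X_{1..s} -> Prop :=
  clos_refl_sym_trans _ (event_edge E y).

Definition is_atom (s n : nat) (E : rel 'I_n) (y : 'I_n -> 'X_{1..s})
  (k : 'I_s) : Prop :=
  forall m : 'X_{1..s},
    ~ event_edge E y (mnm1 k) m /\ ~ event_edge E y m (mnm1 k).

Definition atomic_monomial (s n : nat) (E : rel 'I_n) (y : 'I_n -> 'X_{1..s})
  (m : 'X_{1..s}) : Prop :=
  forall k : 'I_s, (0 < m k)%N -> is_atom E y k.

Definition atomic_crn (s n : nat) (E : rel 'I_n) (y : 'I_n -> 'X_{1..s}) : Prop :=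
  forall m : 'X_{1..s},
    exists! a : 'X_{1..s}, atomic_monomial E y a /\ event_connected E y m a.

Definition event_binomial (F : fieldType) (s n : nat) (y : 'I_n -> 'X_{1..s})
  (i j : 'I_n) : {mpoly F[s]} :=
  mpolyX F (y i) - mpolyX F (y j).

Definition in_event_ideal (F : fieldType) (s n : nat) (E : rel 'I_n)
  (y : 'I_n -> 'X_{1..s}) (p : {mpoly F[s]}) : Prop :=
  exists c : 'I_n -> 'I_n -> {mpoly F[s]},
    p = \sum_(i : 'I_n) \sum_(j : 'I_n | E i j) c i j * event_binomial F y i j.

Definition prime_ideal_pred (R : comNzRingType) (I : R -> Prop) : Prop :=
  ~ I 1 /\ forall a b : R, I (a * b) -> I a \/ I b.

(* Main.v *)
Require Import Defs.
From HB Require Import structures.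
From mathcomp Require Import all_boot all_order all_algebra.
From mathcomp Require Import mpoly.
From Stdlib Require Import Relations ClassicalEpsilon.
Import GRing.Theory.
Local Open Scope ring_scope.

Lemma I0 (F : fieldType) (s n : nat) (E : rel 'I_n) (y : 'I_n -> 'X_{1..s}) :
  @in_event_ideal F s n E y 0.
Proof.
exists (fun _ _ => 0); rewrite big1 // => i _; rewrite big1 // => j _; exact: mul0r.
Qed.

Lemma ID (F : fieldType) (s n : nat) (E : rel 'I_n) (y : 'I_n -> 'X_{1..s}) p q :
  @in_event_ideal F s n E y p -> in_event_ideal E y q -> in_event_ideal E y (p + q).
Proof.
move=> [c ->] [d ->]; exists (fun i j => c i j + d i j).
rewrite -big_split; apply: eq_bigr => i _; rewrite -big_split; apply: eq_bigr => j _.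
by rewrite mulrDl.
Qed.

Lemma IM (F : fieldType) (s n : nat) (E : rel 'I_n) (y : 'I_n -> 'X_{1..s}) r p :
  @in_event_ideal F s n E y p -> in_event_ideal E y (r * p).
Proof.
move=> [c ->]; exists (fun i j => r * c i j).
rewrite mulr_sumr; apply: eq_bigr => i _; rewrite mulr_sumr; apply: eq_bigr => j _.
by rewrite mulrA.
Qed.

Lemma Igen (F : fieldType) (s n : nat) (E : rel 'I_n) (y : 'I_n -> 'X_{1..s}) i0 j0 :
  E i0 j0 -> @in_event_ideal F s n E y (event_binomial F y i0 j0).
Proof.
move=> Eij; exists (fun i j => if (i == i0) && (j == j0) then 1 else 0).
rewrite (bigD1 i0) //= (bigD1 j0) //= !eqxx /= mul1r big1 ?addr0.
  rewrite big1 ?addr0 // => i ni; rewrite big1 // => j _.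
  by rewrite (negbTE ni) mul0r.
by move=> j /andP [_ nj]; rewrite (negbTE nj) mul0r.
Qed.

Lemma Iconn (F : fieldType) (s n : nat) (E : rel 'I_n) (y : 'I_n -> 'X_{1..s}) m m' :
  event_connected E y m m' -> @in_event_ideal F s n E y ('X_[m] - 'X_[m']).
Proof.
elim.
- move=> u v [i [j [N [Eij [-> ->]]]]].
  have -> : 'X_[mnm_add N (y i)] - 'X_[mnm_add N (y j)] = 'X_[N] * event_binomial F y i j.
    by rewrite /event_binomial mulrBr -!mpolyXD.
  by apply: IM; apply: Igen.
- move=> u; rewrite subrr; exact: I0.
- move=> u v _ H; have -> : 'X_[v] - 'X_[u] = (-1) * ('X_[u] - 'X_[v]) :> {mpoly F[s]}.
    by rewrite mulN1r opprB.
  exact: IM.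
- move=> u v w _ H1 _ H2.
  have -> : 'X_[u] - 'X_[w] = ('X_[u] - 'X_[v]) + ('X_[v] - 'X_[w]) :> {mpoly F[s]}.
    by rewrite addrA subrK.
  exact: ID.
Qed.

Lemma conn_add (s n : nat) (E : rel 'I_n) (y : 'I_n -> 'X_{1..s}) m m' N :
  event_connected E y m m' -> event_connected E y (m + N)%MM (m' + N)%MM.
Proof.
elim.
- move=> u v [i [j [N0 [Eij [-> ->]]]]]; apply: rst_step.
  exists i, j, (N0 + N)%MM; split => //; split;
    by rewrite -addmA [mnm_add (y _) N]addmC addmA.
- by move=> u; apply: rst_refl.
- by move=> u v _ H; apply: rst_sym.
- by move=> u v w _ H1 _ H2; apply: rst_trans H2.
Qed.
Theorem lemma5p4 (F : fieldType) (s n : nat) (E : rel 'I_n)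
  (y : 'I_n -> 'X_{1..s}) :
  (0 < s)%N -> (0 < n)%N -> injective y ->
  [pchar F] =i pred0 ->
  weakly_reversible E ->
  atomic_crn E y ->
  prime_ideal_pred (@in_event_ideal F s n E y).
Proof.
move=> _ _ _ _ _ Hat.
pose a m := proj1_sig (constructive_indefinite_description _ (Hat m)).
have Ha m : (atomic_monomial E y (a m) /\ event_connected E y m (a m)) /\
   forall b, atomic_monomial E y b /\ event_connected E y m b -> a m = b.
  exact: (proj2_sig (constructive_indefinite_description _ (Hat m))).
have aat m : atomic_monomial E y (a m) by case: (Ha m) => [[]].
have aconn m : event_connected E y m (a m) by case: (Ha m) => [[]].
have auniq m b : atomic_monomial E y b -> event_connected E y m b -> a m = b.
  by move=> H1 H2; case: (Ha m) => _; apply; split.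
have a0 : a 0%MM = 0%MM.
  by apply: auniq; [move=> k; rewrite mnm0E | apply: rst_refl].
have aD m1 m2 : a (m1 + m2)%MM = (a m1 + a m2)%MM.
  apply: auniq.
    move=> k; rewrite mnmDE addn_gt0 => /orP [] H; [exact: aat H | exact: aat H].
  apply: (rst_trans _ _ _ (a m1 + m2)%MM); first exact: conn_add.
  rewrite [mnm_add (a m1) m2]addmC [mnm_add (a m1) (a m2)]addmC; exact: conn_add.
have aconn2 m m' : event_connected E y m m' -> a m = a m'.
  move=> H; apply: auniq; first exact: aat.
  exact: rst_trans H (aconn m').
have aMn u k : a (u *+ k)%MM = (a u *+ k)%MM.
  elim: k => [|k IH]; first by rewrite !mulm0n.
  by rewrite !mulmS aD IH.
pose h (i : 'I_s) : {mpoly F[s]} := 'X_[a U_(i)%MM].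
pose phi := mmap (@mpolyC s F) h.
have phiX m : phi 'X_[m] = 'X_[a m].
  rewrite /phi mmapX /mmap1 /h mprodXnE; congr 'X_[_].
  rewrite {2}[m]multinomUE_id (big_morph a aD a0); apply: eq_bigr => i _.
  by rewrite aMn.
have phiI p : in_event_ideal E y p -> phi p = 0.
  move=> [c ->]; rewrite /phi rmorph_sum; apply: big1 => i _.
  rewrite rmorph_sum; apply: big1 => j Eij.
  rewrite rmorphM /event_binomial rmorphB /= -/phi !phiX.
  rewrite (aconn2 (y i) (y j)) ?subrr ?mulr0 //.
  by apply: rst_step; exists i, j, 0%MM; rewrite !add0m.
have Iphi p : in_event_ideal E y (p - phi p).
  elim/mpolyind: p => [|c m p _ _ IH]; first by rewrite /phi rmorph0 subr0; exact: I0.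
  have -> : c *: 'X_[m] + p - phi (c *: 'X_[m] + p) =
        c%:MP * ('X_[m] - 'X_[a m]) + (p - phi p).
    rewrite /phi rmorphD /= mmapZ -/phi phiX /=.
    by rewrite !mul_mpolyC scalerBr opprD addrACA.
  apply: ID => //; apply: IM; exact: Iconn.
split.
  move=> /phiI; rewrite /phi rmorph1; apply/eqP; exact: oner_neq0.
move=> p q /phiI; rewrite /phi rmorphM /= -/phi => /eqP; rewrite mulf_eq0 => /orP [] /eqP H.
  by left; move: (Iphi p); rewrite H subr0.
by right; move: (Iphi q); rewrite H subr0.
Qed.
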